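(* Let $d\ge3$ be odd and $n>2$. Then the following statement is false: ''for every $A\in\mathrm{Hull}(\Lambda_{d-1}(d,n))$ we have $\operatorname{Per}(A)\ge(n!/n^n)^{d-1}$, with equality if and only if $A=n^{1-d}J_n^d$.'' That is, there exists $A\in\mathrm{Hull}(\Lambda_{d-1}(d,n))$ such that either $\operatorname{Per}(A)<(n!/n^n)^{d-1}$, or $\operatorname{Per}(A)=(n!/n^n)^{d-1}$ and $A\ne n^{1-d}J_n^d$.
   Context: Let $I_n=\{1,\dots,n\}$. A $d$-dimensional matrix of order $n$ is a function $I_n^d\to\mathbb R$. A $(d-1)$-plane (hyperplane) is the set of positions with one coordinate fixed. $\Lambda_{d-1}(d,n)$ is the set of $(0,1)$-valued $d$-dimensional matrices of order $n$ with exactly one $1$ in each hyperplane. $\mathrm{Hull}(X)$ denotes the convex hull of $X$. A diagonal is a selection of $n$ positions any two of which differ in every coordinate; $\operatorname{Per}(A)$ is the sum over diagonals of the product of the entries on the diagonal. $J_n^d$ is the $d$-dimensional matrix of order $n$ with all entries $1$. *)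

(* Defs.v *)
From HB Require Import structures.
From mathcomp Require Import all_boot all_order all_algebra.
From mathcomp Require Import reals.
Set Implicit Arguments. Unset Strict Implicit. Unset Printing Implicit Defensive.
Import Order.TTheory GRing.Theory Num.Theory.
Local Open Scope ring_scope.

Definition pos (d n : nat) := {ffun 'I_d -> 'I_n}.

Definition dmatrix (R : Type) (d n : nat) := pos d n -> R.

Definition hyperplane (d n : nat) (k : 'I_d) (v : 'I_n) : {set pos d n} :=
  [set x : pos d n | x k == v].

Definition in_Lambda (R : realType) (d n : nat) (A : dmatrix R d n) : Prop :=
  (forall x, A x = 0 \/ A x = 1) /\
  (forall (k : 'I_d) (v : 'I_n),
      #|[set x in hyperplane k v | A x == 1]| = 1%N).

Definition in_Hull_Lambda (R : realType) (d n : nat) (A : dmatrix R d n) : Prop :=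
  exists (m : nat) (w : 'I_m -> R) (B : 'I_m -> dmatrix R d n),
    (forall i, 0 <= w i) /\ (\sum_(i < m) w i = 1) /\
    (forall i, in_Lambda (B i)) /\
    (forall x, A x = \sum_(i < m) w i * B i x).

Definition is_diagonal (d n : nat) (D : {set pos d n}) : bool :=
  (#|D| == n) &&
  [forall x in D, forall y in D, (x != y) ==> [forall k : 'I_d, x k != y k]].

Definition Per (R : realType) (d n : nat) (A : dmatrix R d n) : R :=
  \sum_(D : {set pos d n} | is_diagonal D) \prod_(x in D) A x.

Definition scaledJ (R : realType) (d n : nat) : dmatrix R d n :=
  fun _ => ((n%:R : R) ^+ d.-1)^-1.

(* Main.v *)
Require Import Defs.
From HB Require Import structures.
From mathcomp Require Import all_boot all_order all_algebra.
From mathcomp Require Import reals.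
From mathcomp Require Import perm ring lra.
Import Order.TTheory GRing.Theory Num.Theory.
Local Open Scope ring_scope.
Set Implicit Arguments. Unset Strict Implicit. Unset Printing Implicit Defensive.

Lemma hull_of_fin (R : realType) (d n : nat) (I : finType) (w : I -> R)
  (B : I -> dmatrix R d n) (A : dmatrix R d n) :
  (forall i, 0 <= w i) -> \sum_i w i = 1 -> (forall i, in_Lambda (B i)) ->
  (forall y, A y = \sum_i w i * B i y) -> in_Hull_Lambda A.
Proof.
move=> w0 w1 BL AE.
exists #|I|, (fun j => w (enum_val j)), (fun j => B (enum_val j)).
split; first by move=> j; apply: w0.
split; first by rewrite -w1 (big_enum_val (A:=I) (fun i => w i)).
split; first by move=> j; apply: BL.
by move=> y; rewrite AE (big_enum_val (A:=I) (fun i => w i * B i y)).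
Qed.
Definition pts (d n : nat) (f : 'I_d -> 'I_n -> 'I_n) (i : 'I_n) : pos d n :=
  [ffun k => f k i].
Definition ptmat (R : realType) (d n : nat) (f : 'I_d -> 'I_n -> 'I_n) : dmatrix R d n :=
  fun y => (y \in [set pts f i | i in 'I_n])%:R.

Lemma lambda_pts (R : realType) (d n : nat) (f : 'I_d -> 'I_n -> 'I_n) :
  (forall k, injective (f k)) -> in_Lambda (ptmat R f).
Proof.
move=> finj; split.
  by move=> y; rewrite /ptmat; case: (_ \in _); [right|left].
move=> k v; apply/eqP/cards1P; exists (pts f (invF (finj k) v)).
apply/setP => y; rewrite !inE /ptmat.
apply/idP/idP.
  case/andP => /eqP yk; case: (boolP (y \in _)) => [/imsetP [i _ yi]|]; last first.
    by rewrite eq_sym oner_eq0.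
  move=> _; rewrite yi; apply/eqP; congr pts; apply: (finj k); rewrite f_invF -yk yi /pts ffunE //.
move/eqP => ->; rewrite imset_f // eqxx andbT /pts ffunE f_invF //.
Qed.

Lemma ptmat_sum (R : realType) (d n : nat) (f : 'I_d -> 'I_n -> 'I_n) (k0 : 'I_d) y :
  injective (f k0) -> ptmat R f y = \sum_i (y == pts f i)%:R.
Proof.
move=> fi; rewrite /ptmat; case: (boolP (y \in _)) => [/imsetP [i _ ->]|ny].
  rewrite (bigD1 i) //= eqxx big1 ?addr0 // => j ji.
  case: eqP => // /(congr1 (fun p : pos d n => p k0)); rewrite /pts !ffunE => /fi ij.
  by rewrite ij eqxx in ji.
rewrite big1 // => i _; case: eqP => // yi; case/negP: ny; rewrite yi imset_f //.
Qed.

Lemma diag_prop (d n : nat) (D : {set pos d n}) x y k :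
  is_diagonal D -> x \in D -> y \in D -> x != y -> x k != y k.
Proof.
case/andP => _ /forallP H xD yD xy.
by move: (H x); rewrite xD /= => /forallP /(_ y); rewrite yD xy /= => /forallP.
Qed.

Lemma diag_card (d n : nat) (D : {set pos d n}) : is_diagonal D -> #|D| = n.
Proof. by case/andP => /eqP. Qed.

Lemma diag_uniq (d n : nat) (D : {set pos d n}) (k : 'I_d) x y :
  is_diagonal D -> x \in D -> y \in D -> x k = y k -> x = y.
Proof.
move=> dD xD yD e; case: (eqVneq x y) => // /(diag_prop k dD xD yD).
by rewrite e eqxx.
Qed.

Lemma diag_ex (d n : nat) (D : {set pos d n}) (k : 'I_d) i :
  is_diagonal D -> exists2 y, y \in D & y k = i.
Proof.
move=> dD.
have cI : #|[set (y : pos d n) k | y in D]| = n.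
  rewrite card_in_imset ?diag_card // => x y xD yD e; exact: (diag_uniq dD xD yD e).
have : [set (y : pos d n) k | y in D] == [set: 'I_n].
  by rewrite eqEcard subsetT cardsT card_ord cI leqnn.
move/eqP => e; have : i \in [set (y : pos d n) k | y in D] by rewrite e inE.
by case/imsetP => y yD ->; exists y.
Qed.

Definition phi (d' n : nat) (D : {set pos d'.+1 n}) : {ffun 'I_d' -> {ffun 'I_n -> 'I_n}} :=
  [ffun k => [ffun i => odflt i (omap (fun y : pos d'.+1 n => y (lift ord0 k))
                                   [pick y in D | y ord0 == i])]].

Lemma phiE (d' n : nat) (D : {set pos d'.+1 n}) y k :
  is_diagonal D -> y \in D -> phi D k (y ord0) = y (lift ord0 k).
Proof.
move=> dD yD; rewrite /phi !ffunE.
case: pickP => [y' /andP [y'D /eqP e]|/(_ y)] /=.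
  by rewrite (diag_uniq dD y'D yD e).
by rewrite yD eqxx.
Qed.

Lemma count_diag (d' n : nat) :
  (#|[set D : {set pos d'.+1 n} | is_diagonal D]| <= (n`!) ^ d')%N.
Proof.
rewrite -(@card_in_imset _ _ (@phi d' n)); last first.
  move=> D1 D2; rewrite !inE => d1 d2 e.
  have sub : forall E1 E2 : {set pos d'.+1 n}, is_diagonal E1 -> is_diagonal E2 ->
     phi E1 = phi E2 -> E1 \subset E2.
    move=> E1 E2 e1 e2 ee; apply/subsetP => y yE1.
    have [y2 y2E y2e] := diag_ex ord0 (y ord0) e2.
    suff -> : y = y2 by [].
    apply/ffunP => j; case: (unliftP ord0 j) => [k ->|->]; last by rewrite y2e.
    by rewrite -(phiE k e1 yE1) ee -y2e (phiE k e2 y2E).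
  by apply/eqP; rewrite eqEsubset !sub.
apply: leq_trans (subset_leq_card (_ : _ \subset ffun_on [set g : {ffun 'I_n -> 'I_n} | injectiveb g])) _.
  apply/subsetP => g /imsetP [D]; rewrite inE => dD ->.
  apply/ffun_onP => k; rewrite inE; apply/injectiveP => i1 i2.
  have [y1 y1D <-] := diag_ex ord0 i1 dD.
  have [y2 y2D <-] := diag_ex ord0 i2 dD.
  rewrite !phiE // => e; by rewrite (diag_uniq dD y1D y2D e).
by rewrite card_ffun_on card_inj_ffuns !card_ord ffactnn.
Qed.


Lemma sum_invol (R : realType) (T : finType) (f : T -> T) (g : T -> R) :
  involutive f -> (forall t, g (f t) = - g t) -> \sum_t g t = 0.
Proof.
move=> fK gf.
have S : \sum_t g t = - \sum_t g t.
  rewrite {1}(reindex_inj (inv_inj fK)) /=.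
  rewrite -sumrN; apply: eq_bigr => t _; exact: gf.
have : (\sum_t g t) *+ 2 = 0 by rewrite mulr2n {1}S addNr.
by move/eqP; rewrite mulrn_eq0 /= => /eqP.
Qed.

Definition sgn (R : realType) (d : nat) (x : {ffun 'I_d -> bool}) : R :=
  \prod_k (if x k then -1 else 1).
Definition flip (d : nat) (j : 'I_d) (x : {ffun 'I_d -> bool}) : {ffun 'I_d -> bool} :=
  [ffun k => if k == j then ~~ x k else x k].

Lemma flipK (d : nat) (j : 'I_d) : involutive (flip j).
Proof.
by move=> x; apply/ffunP => k; rewrite !ffunE; case: (k == j) => //; rewrite negbK.
Qed.

Lemma sgn_flip (R : realType) (d : nat) (j : 'I_d) x : sgn R (flip j x) = - sgn R x.
Proof.
rewrite /sgn (bigD1 j) //= [in RHS](bigD1 j) //= ffunE eqxx.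
rewrite (eq_bigr (fun k => if x k then -1 else 1)); last first.
  by move=> k kj; rewrite ffunE (negbTE kj).
by case: (x j) => /=; rewrite ?mulN1r ?mul1r ?opprK.
Qed.

Lemma sum_sgn (R : realType) (d : nat) (j : 'I_d) : \sum_(x : {ffun 'I_d -> bool}) sgn R x = 0.
Proof. apply: (sum_invol (flipK j)) => x; exact: sgn_flip. Qed.

Lemma sgn_pm (R : realType) (d : nat) (x : {ffun 'I_d -> bool}) : sgn R x = 1 \/ sgn R x = -1 :> R.
Proof.
rewrite /sgn; apply: (big_ind (fun r : R => r = 1 \/ r = -1)); first by left.
  move=> a b [->|->] [->|->]; rewrite ?mul1r ?mulr1 ?mulrNN ?mulr1; by [left|right|left].
by move=> k _; case: (x k); [right|left].
Qed.

Lemma sgn_neg (R : realType) (d : nat) (x : {ffun 'I_d -> bool}) : odd d ->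
  sgn R [ffun k => ~~ x k] = - sgn R x :> R.
Proof.
move=> od; rewrite /sgn.
rewrite (eq_bigr (fun k => - (if x k then -1 else 1))); last first.
  by move=> k _; rewrite ffunE; case: (x k); rewrite ?opprK.
by rewrite prodrN cardT size_enum_ord -signr_odd od expr1 mulN1r.
Qed.

Lemma core (R : realType) (T : finType) (Q : {set T}) (a : T -> R) (c : R) :
  (#|Q| <= 2)%N ->
  (forall y1 y2, y1 \in Q -> y2 \in Q -> y1 != y2 -> a y1 * a y2 <= 0) ->
  \prod_(y in Q) (c + a y) + \prod_(y in Q) (c - a y) <= 2 * c ^+ #|Q|.
Proof.
move=> Q2 H.
have : (#|Q| == 0)%N || (#|Q| == 1)%N || (#|Q| == 2)%N.
  by move: Q2; case: #|Q| => [|[|[|]]].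
case/orP => [/orP [Q0|Q1]|Q2'].
- move: (Q0); rewrite cards_eq0 => /eqP ->; rewrite !big_set0 cards0 expr0; lra.
- move: (Q1) => /cards1P [y ->]; rewrite !big_set1 cards1 expr1; lra.
- move: (Q2') => /cards2P [y1 [y2 [y12 QE]]].
  have := H y1 y2; rewrite QE !inE !eqxx orbT => /(_ isT isT y12) h.
  rewrite cards2 y12 !big_setU1 ?inE 1?(eq_sym y2) //=. rewrite !big_set1. nra.
Qed.

Definition o0 (n' : nat) : 'I_(n'.+3) := ord0.
Definition o1 (n' : nat) : 'I_(n'.+3) := @Ordinal (n'.+3) 1 isT.
Definition o2 (n' : nat) : 'I_(n'.+3) := @Ordinal (n'.+3) 2 isT.
Definition c1 (d' : nat) : 'I_(d'.+3) := @Ordinal (d'.+3) 1 isT.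

Definition rho (n' d' : nat) (k : 'I_(d'.+3)) (b : bool) : {perm 'I_(n'.+3)} :=
  if k == ord0 then (if b then (tperm (o1 n') (o2 n') * tperm (o0 n') (o1 n'))%g
                     else tperm (o1 n') (o2 n'))
  else (if b then tperm (o0 n') (o1 n') else 1%g).

Lemma rho0 n' d' k b : @rho n' d' k b (o0 n') = if b then o1 n' else o0 n'.
Proof.
have h : tperm (o1 n') (o2 n') (o0 n') = o0 n' by rewrite tpermD.
rewrite /rho; case: (k == ord0); case: b.
all: by rewrite ?permM ?perm1 ?h ?tpermL.
Qed.

Definition jj (n' d' : nat) (i : 'I_(n'.+3)) : 'I_(d'.+3) :=
  if i == o2 n' then c1 d' else ord0.

Lemma rho_flip n' d' i : i != o0 n' ->
  @rho n' d' (@jj n' d' i) true i = @rho n' d' (@jj n' d' i) false i.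
Proof.
move=> i0; rewrite /rho /jj; case: (eqVneq i (o2 n')) => [->|i2].
  by rewrite /= perm1 tpermD.
rewrite /= permM; case: (eqVneq i (o1 n')) => [->|i1].
  by rewrite tpermL tpermD.
have e : tperm (o1 n') (o2 n') i = i by rewrite tpermD // eq_sym.
by rewrite e tpermD // eq_sym.
Qed.

Definition ff (n' d' : nat) (x : {ffun 'I_(d'.+3) -> bool})
  (c : {ffun 'I_(d'.+3) -> 'I_(n'.+3)}) : 'I_(d'.+3) -> 'I_(n'.+3) -> 'I_(n'.+3) :=
  fun k i => @rho n' d' k (x k) i + c k.

Lemma ff_inj n' d' x c k : injective (@ff n' d' x c k).
Proof. by move=> i j /addIr /perm_inj. Qed.

Definition Bm (R : realType) (n' d' : nat) x c : dmatrix R (d'.+3) (n'.+3) :=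
  ptmat R (@ff n' d' x c).

Definition emb (n' d' : nat) (x : {ffun 'I_(d'.+3) -> bool}) : pos (d'.+3) (n'.+3) :=
  [ffun k => if x k then o1 n' else o0 n'].

Definition E (R : realType) (n' d' : nat) (y : pos (d'.+3) (n'.+3)) : R :=
  \sum_(x : {ffun 'I_(d'.+3) -> bool}) sgn R x * (y == emb n' x)%:R.

Definition cz (n' d' : nat) : {ffun 'I_(d'.+3) -> 'I_(n'.+3)} := [ffun => 0].

Lemma sumBc (R : realType) n' d' x y :
  \sum_c @Bm R n' d' x c y = (n'.+3)%:R.
Proof.
under eq_bigr => c _ do rewrite /Bm (ptmat_sum _ _ (@ff_inj n' d' x c ord0)).
rewrite exchange_big /=.
rewrite (eq_bigr (fun _ => 1)); first by rewrite sumr_const card_ord.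
move=> i _.
pose c0 : {ffun 'I_(d'.+3) -> 'I_(n'.+3)} := [ffun k => y k - @rho n' d' k (x k) i].
rewrite (eq_bigr (fun c => (c == c0)%:R)); last first.
  move=> c _; suff -> : (y == pts (ff x c) i) = (c == c0) by [].
  apply/idP/idP => /eqP e; apply/eqP.
    by rewrite /c0 e; apply/ffunP => k; rewrite /pts /ff !ffunE addrAC subrr add0r.
  by rewrite e; apply/ffunP => k; rewrite /pts /ff /c0 !ffunE addrC subrK.
by rewrite (bigD1 c0) //= eqxx big1 ?addr0 // => c /negbTE ->.
Qed.

Lemma sumB0 (R : realType) n' d' y :
  \sum_x sgn R x * @Bm R n' d' x (cz n' d') y = E R y.
Proof.
under eq_bigr => x _ do rewrite /Bm (ptmat_sum _ _ (@ff_inj n' d' x _ ord0)) mulr_sumr.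
rewrite exchange_big /= (bigD1 (o0 n')) //= [X in _ + X]big1 ?addr0.
  rewrite /E; apply: eq_bigr => x _; congr (_ * (_ == _)%:R).
  by apply/ffunP => k; rewrite /pts /ff /emb /cz !ffunE addr0 rho0.
move=> i i0; apply: (sum_invol (flipK (@jj n' d' i))) => x.
rewrite sgn_flip mulNr; congr (- (_ * (_ == _)%:R)).
apply/ffunP => k; rewrite /pts /ff /flip !ffunE.
case: (eqVneq k (@jj n' d' i)) => [->|] //=.
by case: (x _) => //=; rewrite rho_flip.
Qed.

Lemma emb_inj n' d' : injective (@emb n' d').
Proof.
move=> x x' e; apply/ffunP => k; have := congr1 (fun p : pos _ _ => p k) e.
by rewrite /emb !ffunE; case: (x k); case: (x' k).
Qed.

Lemma E_emb (R : realType) n' d' x : E R (@emb n' d' x) = sgn R x.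
Proof.
rewrite /E (bigD1 x) //= eqxx mulr1 big1 ?addr0 // => x' x'x.
by rewrite (inj_eq (@emb_inj n' d')) eq_sym (negbTE x'x) mulr0.
Qed.

Lemma E_out (R : realType) n' d' (y : pos (d'.+3) (n'.+3)) :
  y \notin [set @emb n' d' x | x in {ffun 'I_(d'.+3) -> bool}] -> E R y = 0.
Proof.
move=> ny; rewrite /E big1 // => x _; case: eqP => [e|]; last by rewrite mulr0.
by case/negP: ny; rewrite e imset_f.
Qed.

Definition cJ (R : realType) (n' d' : nat) : R := (((n'.+3)%:R : R) ^+ (d'.+3).-1)^-1.
Definition kap (R : realType) (n' d' : nat) : R :=
  ((#|{ffun 'I_(d'.+3) -> bool}|)%:R * (n'.+3)%:R ^+ (d'.+3))^-1.
Definition X (R : realType) (n' d' : nat) (s : R) : dmatrix R (d'.+3) (n'.+3) :=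
  fun y => cJ R n' d' + s * (kap R n' d' * E R y).

Lemma perD (R : realType) n' d' (D : {set pos (d'.+3) (n'.+3)}) :
  odd d'.+3 -> is_diagonal D ->
  \prod_(y in D) @X R n' d' 1 y + \prod_(y in D) @X R n' d' (-1) y <= 2 * cJ R n' d' ^+ (n'.+3).
Proof.
move=> od dD.
set c := cJ R n' d'.
pose a := fun y : pos (d'.+3) (n'.+3) => kap R n' d' * E R y.
set Qim := [set @emb n' d' x | x in {ffun 'I_(d'.+3) -> bool}].
have c0 : 0 <= c by rewrite /c /cJ invr_ge0 exprn_ge0 // ler0n.
rewrite !(@big_setID _ _ _ _ D Qim) /=.
have r1 : forall s : R, \prod_(y in D :\: Qim) @X R n' d' s y = c ^+ #|D :\: Qim|.
  move=> s; rewrite -prodr_const; apply: eq_bigr => y; rewrite inE => /andP [nQ _].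
  by rewrite /X E_out // mulr0 mulr0 addr0.
rewrite !r1.
rewrite (eq_bigr (fun y => c + a y)); last by move=> y _; rewrite /X mul1r.
rewrite [Z in _ + Z * _ <= _](eq_bigr (fun y => c - a y)); last by move=> y _; rewrite /X mulN1r.
have hn : c ^+ n'.+3 = c ^+ #|D :&: Qim| * c ^+ #|D :\: Qim| by rewrite -exprD cardsID diag_card.
rewrite -mulrDl hn mulrA.
apply: ler_wpM2r; first by rewrite exprn_ge0.
apply: core.
  rewrite -(@card_in_imset _ _ (fun y : pos _ _ => y ord0)); last first.
    move=> y1 y2; rewrite !inE => /andP [y1D _] /andP [y2D _]; move=> e; exact: (diag_uniq dD y1D y2D e).
  apply: leq_trans (subset_leq_card (_ : _ \subset [set o0 n'; o1 n'])) _.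
    apply/subsetP => z /imsetP [y]; rewrite !inE => /andP [_ /imsetP [x _ ->]] ->.
    by rewrite /emb ffunE; case: (x ord0); rewrite eqxx ?orbT.
  by rewrite cards2.
move=> y1 y2; rewrite !inE => /andP [y1D /imsetP [x1 _ e1]] /andP [y2D /imsetP [x2 _ e2]] y12.
have x2E : x2 = [ffun k => ~~ x1 k].
  apply/ffunP => k; have := diag_prop k dD y1D y2D y12.
  by rewrite e1 e2 /emb !ffunE; case: (x1 k); case: (x2 k).
rewrite /a e1 e2 E_emb E_emb x2E sgn_neg //.
have -> : kap R n' d' * sgn R x1 * (kap R n' d' * - sgn R x1) =
   - (kap R n' d' * sgn R x1) ^+ 2 by rewrite expr2; ring.
by rewrite oppr_le0 sqr_ge0.
Qed.

Lemma sum_eq1 (R : realType) (T : finType) (c0 : T) : \sum_(c : T) (c == c0)%:R = 1 :> R.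
Proof. by rewrite (bigD1 c0) //= eqxx big1 ?addr0 // => c /negbTE ->. Qed.

Lemma kapE (R : realType) n' d' :
  kap R n' d' * (#|{ffun 'I_(d'.+3) -> bool}| * (n'.+3))%:R = cJ R n' d'.
Proof.
rewrite /kap /cJ card_ffun card_bool card_ord natrM !natrX (exprSr ((n'.+3)%:R : R) d'.+2) /=.
have h2 : (2%:R : R) ^+ d'.+3 != 0 by rewrite expf_neq0 // pnatr_eq0.
have hn : ((n'.+3)%:R : R) != 0 by rewrite pnatr_eq0.
have hn2 : ((n'.+3)%:R : R) ^+ d'.+2 != 0 by rewrite expf_neq0.
field; rewrite hn2 h2 andbT /=; apply: lt0r_neq0; have := ler0n R n'; lra.
Qed.

Lemma hullX (R : realType) n' d' (s : R) : s = 1 \/ s = -1 ->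
  in_Hull_Lambda (@X R n' d' s).
Proof.
move=> hs.
pose I := ({ffun 'I_(d'.+3) -> bool} * {ffun 'I_(d'.+3) -> 'I_(n'.+3)})%type.
pose w := fun p : I => kap R n' d' * (1 + s * sgn R p.1 * (p.2 == cz n' d')%:R).
have k0 : 0 <= kap R n' d' by rewrite /kap invr_ge0 mulr_ge0 ?exprn_ge0 ?ler0n.
apply: (@hull_of_fin R _ _ I w (fun p => @Bm R n' d' p.1 p.2)).
- move=> [x c]; rewrite /w /=; apply: mulr_ge0 => //.
  case: (c == _); last by rewrite mulr0 addr0.
  by rewrite mulr1; case: hs => ->; case: (sgn_pm R x) => ->; rewrite ?mul1r ?mulN1r ?opprK //; lra.
- rewrite -(pair_bigA _ (fun x c => w (x, c))) /w /=.
  rewrite (eq_bigr (fun x => kap R n' d' * ((n'.+3 ^ d'.+3)%:R + s * sgn R x))); last first.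
    move=> x _; rewrite -mulr_sumr big_split /= sumr_const card_ffun !card_ord.
    by rewrite -mulr_sumr sum_eq1 mulr1.
  rewrite -mulr_sumr big_split /= -mulr_sumr (sum_sgn R ord0) mulr0 addr0 sumr_const.
  rewrite natrX -[Z in _ * Z]mulr_natl /kap mulVf //.
  rewrite card_ffun card_bool card_ord natrX mulf_neq0 // expf_neq0 // pnatr_eq0 //.
- move=> p; apply: lambda_pts => k; exact: ff_inj.
- move=> y; rewrite -(pair_bigA _ (fun x c => w (x, c) * Bm R x c y)) /w /=.
  rewrite (eq_bigr (fun x => kap R n' d' * ((n'.+3)%:R + s * (sgn R x * Bm R x (cz n' d') y)))); last first.
    move=> x _; under eq_bigr => c _ do rewrite -mulrA mulrDl mul1r.
    rewrite -mulr_sumr big_split /= sumBc (bigD1 (cz n' d')) //= eqxx mulr1 big1 ?addr0.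
      by rewrite mulrA.
    by move=> c /negbTE ->; rewrite mulr0 mul0r.
  rewrite -mulr_sumr big_split /= -mulr_sumr sumB0 sumr_const.
  rewrite mulrDr -[(_ *+ #|xpredT|)]mulr_natr -natrM mulnC kapE /X; ring.
Qed.

Lemma bound_eq (R : realType) n' d' :
  cJ R n' d' ^+ n'.+3 * ((n'.+3)`! ^ (d'.+2))%:R =
  (((n'.+3)`!)%:R / ((n'.+3) ^ (n'.+3))%:R) ^+ (d'.+3).-1.
Proof.
rewrite /cJ /= expr_div_n !natrX -!exprVn -!exprM mulnC mulrC.
by [].
Qed.

Lemma XneJ (R : realType) n' d' (s : R) : s = 1 \/ s = -1 ->
  @X R n' d' s <> @scaledJ R d'.+3 n'.+3.
Proof.
move=> hs e.
have := congr1 (fun f => f (@emb n' d' [ffun => false])) e.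
rewrite /X /scaledJ E_emb.
have -> : sgn R ([ffun => false] : {ffun 'I_(d'.+3) -> bool}) = 1.
  by rewrite /sgn big1 // => k _; rewrite ffunE.
have kp : 0 < kap R n' d'.
  by rewrite /kap invr_gt0 mulr_gt0 // ?exprn_gt0 // ?ltr0n // card_ffun card_bool card_ord expn_gt0.
rewrite /cJ; case: hs => -> ; lra.
Qed.

Unset Implicit Arguments.
Theorem theorem3p8 (R : realType) (d n : nat) :
  (3 <= d)%N -> odd d -> (2 < n)%N ->
  exists A : dmatrix R d n,
    in_Hull_Lambda A /\
    (Per A < ((n`!)%:R / (n ^ n)%:R) ^+ d.-1 \/
     (Per A = ((n`!)%:R / (n ^ n)%:R) ^+ d.-1 /\ A <> @scaledJ R d n)).
Proof.
case: d => [|[|[|d']]] // _ od; case: n => [|[|[|n']]] // _.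
set b := (((n'.+3)`!)%:R / ((n'.+3) ^ (n'.+3))%:R) ^+ (d'.+3).-1.
have hP : Per (@X R n' d' 1) + Per (@X R n' d' (-1)) <= 2 * b.
  rewrite /Per -big_split /=.
  apply: le_trans (ler_sum _ (fun D dD => @perD R n' d' D od dD)) _.
  rewrite (eq_bigl (fun D => D \in [set D | is_diagonal D])); last by move=> D; rewrite inE.
  rewrite sumr_const -[Z in Z <= _]mulr_natr -mulrA.
  have c0 : 0 <= cJ R n' d' by rewrite /cJ invr_ge0 exprn_ge0 // ler0n.
  rewrite /b -bound_eq; apply: ler_wpM2l => //; apply: ler_wpM2l; first exact: exprn_ge0.
  by rewrite ler_nat count_diag.
have h1 : (1 : R) = 1 \/ (1 : R) = -1 by left.
have h2 : (-1 : R) = 1 \/ (-1 : R) = -1 by right.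
case: (lerP (Per (@X R n' d' 1)) b) => h.
  exists (@X R n' d' 1); split; first exact: hullX.
  move: h; rewrite le_eqVlt => /orP [/eqP e|l]; last by left.
  by right; split => //; apply: XneJ.
exists (@X R n' d' (-1)); split; first exact: hullX.
left; lra.
Qed.
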